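(* Let $f\in C(\mathbb{R}^2)$ be $\kappa$-Lipschitz and satisfy $f(r+l,\tau+k)=f(r,\tau)$ for all $(l,k)\in\mathbb{Z}^2$, and let $v(\tau;c)$ be the solution of $\dot v=f(v,\tau)$, $\tau>0$, $v(0)=c$. Then for all $\sigma,l,t>0$ and all $c\in\mathbb{R}$, \[v((\sigma+l)t;(\sigma+l)c)\le v(\sigma t;\sigma c)+v(lt;lc)+2(\|f\|_\infty+1).\] *)

(* Defs.v *)
From Stdlib Require Import Reals.
From Coquelicot Require Import Coquelicot.
Open Scope R_scope.

Definition lipschitz2 (kappa : R) (f : R -> R -> R) : Prop :=
  forall x1 t1 x2 t2 : R,
    Rabs (f x1 t1 - f x2 t2) <= kappa * sqrt ((x1 - x2) ^ 2 + (t1 - t2) ^ 2).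

Definition periodic_Z2 (f : R -> R -> R) : Prop :=
  forall (r tau : R) (l k : Z), f (r + IZR l) (tau + IZR k) = f r tau.

(* ||f||_oo = sup over R^2 of |f| (as a real; finite for continuous periodic f). *)
Definition sup_norm (f : R -> R -> R) : R :=
  real (Lub_Rbar (fun y => exists x t, y = Rabs (f x t))).

Definition is_solution_family (f : R -> R -> R) (v : R -> R -> R) : Prop :=
  forall c : R,
    v 0 c = c /\
    filterlim (fun s => v s c) (at_right 0) (locally c) /\
    (forall tau, 0 < tau -> is_derive (fun s => v s c) tau (f (v tau c) tau)).

(* Main.v *)
Require Import Defs.
From Stdlib Require Import Reals Lra Lia.
From Coquelicot Require Import Coquelicot.
Open Scope R_scope.

Definition rc (g : R -> R) (t0 : R) : Prop :=
  forall eps, 0 < eps -> exists del, 0 < del /\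
    forall s, t0 < s < t0 + del -> Rabs (g s - g t0) < eps.

Lemma is_derive_eq (g : R -> R) x l l' : is_derive g x l -> l = l' -> is_derive g x l'.
Proof. intros H E; subst; exact H. Qed.

Lemma cont_eps (g : R -> R) x l : is_derive g x l -> forall eps, 0 < eps ->
  exists del, 0 < del /\ forall y, Rabs (y - x) < del -> Rabs (g y - g x) < eps.
Proof.
  intros H eps He.
  assert (C := ex_derive_continuous g x (ex_intro _ l H)).
  destruct (proj1 (filterlim_locally _ _) C (mkposreal eps He)) as [d Hd].
  exists d. split. apply cond_pos. intros y Hy. apply (Hd y Hy).
Qed.

Lemma deriv_rc (g : R -> R) x l : is_derive g x l -> rc g x.
Proof.
  intros H eps He. destruct (cont_eps g x l H eps He) as [d [Hd H1]].
  exists d; split; auto. intros s Hs. apply H1. rewrite Rabs_right; lra.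
Qed.

Lemma deriv_cpt (g : R -> R) x l : is_derive g x l -> continuity_pt g x.
Proof.
  intros H. apply continuity_pt_filterlim.
  exact (ex_derive_continuous g x (ex_intro _ l H)).
Qed.

Lemma rc_diff y1 y2 t0 : rc y1 t0 -> rc y2 t0 -> rc (fun x => y1 x - y2 x) t0.
Proof.
  intros H1 H2 eps He.
  destruct (H1 (eps/2)) as [d1 [Hd1 K1]]; [lra|].
  destruct (H2 (eps/2)) as [d2 [Hd2 K2]]; [lra|].
  exists (Rmin d1 d2). split. apply Rmin_pos; auto.
  intros s Hs.
  assert (A1 := K1 s). assert (A2 := K2 s).
  assert (Rmin d1 d2 <= d1) by apply Rmin_l. assert (Rmin d1 d2 <= d2) by apply Rmin_r.
  specialize (A1 ltac:(lra)). specialize (A2 ltac:(lra)).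
  replace (y1 s - y2 s - (y1 t0 - y2 t0)) with ((y1 s - y1 t0) - (y2 s - y2 t0)) by ring.
  eapply Rle_lt_trans. apply Rabs_triang. rewrite Rabs_Ropp. lra.
Qed.

Lemma rc_const_add g t0 K : rc g t0 -> rc (fun x => g x + K) t0.
Proof.
  intros H eps He. destruct (H eps He) as [d [Hd K1]]. exists d; split; auto.
  intros s Hs. replace (g s + K - (g t0 + K)) with (g s - g t0) by ring. auto.
Qed.

Lemma rc_opp g t0 : rc g t0 -> rc (fun x => - g x) t0.
Proof.
  intros H eps He. destruct (H eps He) as [d [Hd K1]]. exists d; split; auto.
  intros s Hs. replace (- g s - - g t0) with (- (g s - g t0)) by ring.
  rewrite Rabs_Ropp. auto.
Qed.

Lemma rc_shift g m : rc g 0 -> rc (fun s => g (s - m)) m.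
Proof.
  intros H eps He. destruct (H eps He) as [d [Hd K1]]. exists d; split; auto.
  intros s Hs. replace (m - m) with 0 by ring. apply K1. lra.
Qed.

Lemma mvt_closed (g D : R -> R) a b K : a < b ->
  (forall x, a <= x <= b -> is_derive g x (D x) /\ D x <= K) ->
  g b - g a <= K * (b - a).
Proof.
  intros Hab H.
  assert (Hm := MVT_gen g a b D). cbv zeta in Hm.
  rewrite Rmin_left, Rmax_right in Hm by lra.
  destruct Hm as [c [Hc E]].
  - intros x Hx. apply H; lra.
  - intros x Hx. apply (deriv_cpt g x (D x)). apply H; lra.
  - rewrite E. apply Rmult_le_compat_r; [lra|]. apply H; lra.
Qed.

Lemma mvt_le (g D : R -> R) t0 T K : t0 < T ->
  (forall x, t0 < x <= T -> is_derive g x (D x) /\ D x <= K) -> rc g t0 ->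
  g T - g t0 <= K * (T - t0).
Proof.
  intros HT H Hrc.
  destruct (Rle_or_lt (g T - g t0) (K * (T - t0))) as [|Hc]; auto. exfalso.
  set (e := g T - g t0 - K * (T - t0)).
  destruct (Hrc (e/2)) as [d [Hd K1]]. unfold e; lra.
  set (u := Rmin (Rmin d (T - t0)) (e / (4 * (Rabs K + 1))) / 2).
  assert (Hu0 : 0 < u).
  { unfold u. assert (0 < Rabs K + 1) by (pose proof (Rabs_pos K); lra).
    assert (0 < e / (4 * (Rabs K + 1))) by (apply Rdiv_lt_0_compat; unfold e; lra).
    apply Rdiv_lt_0_compat; [|lra]. repeat apply Rmin_pos; lra. }
  assert (Hu1 : u < d /\ u < T - t0 /\ u <= e / (4 * (Rabs K + 1))).
  { unfold u in *. pose proof (Rmin_l (Rmin d (T - t0)) (e / (4 * (Rabs K + 1)))).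
    pose proof (Rmin_r (Rmin d (T - t0)) (e / (4 * (Rabs K + 1)))).
    pose proof (Rmin_l d (T - t0)). pose proof (Rmin_r d (T - t0)). lra. }
  assert (Hlt : t0 + u < T) by lra.
  assert (M1 := mvt_closed g D (t0 + u) T K Hlt).
  assert (M2 : g T - g (t0 + u) <= K * (T - (t0 + u))).
  { apply M1. intros x Hx. apply H. lra. }
  assert (Hlt2 : t0 < t0 + u < t0 + d) by lra.
  assert (M3 := K1 (t0 + u) Hlt2).
  assert (M4 : Rabs K * u <= e / 4).
  { assert (0 < Rabs K + 1) by (pose proof (Rabs_pos K); lra).
    assert ((Rabs K + 1) * u <= e / 4).
    { apply Rmult_le_reg_l with (/ (Rabs K + 1)). apply Rinv_0_lt_compat; lra.
      rewrite <- Rmult_assoc, Rinv_l by lra. replace (e / (4 * (Rabs K + 1))) with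
        (/ (Rabs K + 1) * (e/4)) in Hu1 by (field; lra). lra. }
    lra. }
  assert (M5 : - (K * u) <= Rabs K * u).
  { replace (- (K * u)) with ((- K) * u) by ring. apply Rmult_le_compat_r; [lra|].
    rewrite <- Rabs_Ropp. apply Rle_abs. }
  apply Rabs_def2 in M3. unfold e in *. lra.
Qed.

Lemma lip_x f kappa : lipschitz2 kappa f -> forall x y t,
  Rabs (f x t - f y t) <= kappa * Rabs (x - y).
Proof.
  intros H x y t. specialize (H x t y t).
  replace ((x - y) ^ 2 + (t - t) ^ 2) with (Rsqr (x - y)) in H by (unfold Rsqr; ring).
  rewrite sqrt_Rsqr_abs in H. exact H.
Qed.

Lemma kappa_nonneg f kappa : lipschitz2 kappa f -> 0 <= kappa.
Proof.
  intros H. specialize (H 1 0 0 0).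
  replace ((1 - 0) ^ 2 + (0 - 0) ^ 2) with 1 in H by ring.
  rewrite sqrt_1 in H. pose proof (Rabs_pos (f 1 0 - f 0 0)). lra.
Qed.

Lemma cmp f kappa (Hlip : lipschitz2 kappa f) (y1 y2 : R -> R) t0 T :
  t0 <= T -> rc y1 t0 -> rc y2 t0 ->
  (forall x, t0 < x <= T -> is_derive y1 x (f (y1 x) x)) ->
  (forall x, t0 < x <= T -> is_derive y2 x (f (y2 x) x)) ->
  y1 t0 <= y2 t0 -> y1 T <= y2 T.
Proof.
  intros HT R1 R2 D1 D2 H0.
  assert (Hk := kappa_nonneg f kappa Hlip).
  destruct (Rle_or_lt (y1 T) (y2 T)) as [|HdT]; auto. exfalso.
  destruct (Req_dec t0 T) as [E|HT']. { subst. lra. }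
  set (d := fun x => y1 x - y2 x).
  set (E := fun x => t0 <= x <= T /\ d x <= 0).
  destruct (completeness E) as [s [Hub Hlub]].
  { exists T. intros x [Hx _]. lra. }
  { exists t0. split. lra. unfold d; lra. }
  assert (Hs0 : t0 <= s). { apply Hub. split. lra. unfold d; lra. }
  assert (HsT : s <= T). { apply Hlub. intros x [Hx _]. lra. }
  assert (Hrc : rc d s /\ d s <= 0).
  { destruct (Req_dec s t0) as [->|Hst].
    - split. apply rc_diff; auto. unfold d; lra.
    - assert (Dy1 := D1 s ltac:(lra)). assert (Dy2 := D2 s ltac:(lra)).
      split. apply rc_diff; eapply deriv_rc; eauto.
      destruct (Rle_or_lt (d s) 0) as [|Hpos]; auto. exfalso.
      destruct (cont_eps _ _ _ Dy1 (d s / 2)) as [e1 [He1 K1]]; [lra|].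
      destruct (cont_eps _ _ _ Dy2 (d s / 2)) as [e2 [He2 K2]]; [lra|].
      set (e := Rmin e1 e2).
      assert (e <= e1) by apply Rmin_l. assert (e <= e2) by apply Rmin_r.
      assert (0 < e) by (apply Rmin_pos; auto).
      assert (s <= s - e / 2).
      { apply Hlub. intros x [Hx Hdx].
        assert (x <= s) by (apply Hub; split; auto).
        destruct (Rle_or_lt x (s - e / 2)) as [|Hx2]; auto. exfalso.
        assert (Rabs (x - s) < e) by (rewrite Rabs_left1; lra).
        assert (A1 := K1 x ltac:(lra)). assert (A2 := K2 x ltac:(lra)).
        apply Rabs_def2 in A1. apply Rabs_def2 in A2. unfold d in *; cbv beta in *. lra. }
      lra. }
  destruct Hrc as [Hrc Hds].
  assert (HsT2 : s < T). { destruct (Req_dec s T) as [->|]; [unfold d in Hds; lra | lra]. }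
  assert (Pos : forall x, s < x <= T -> 0 < d x).
  { intros x Hx. destruct (Rle_or_lt (d x) 0) as [Hn|]; auto.
    assert (x <= s) by (apply Hub; split; [lra|auto]). lra. }
  set (h := fun x => exp (- kappa * x) * d x).
  set (D := fun x => exp (- kappa * x) * ((f (y1 x) x - f (y2 x) x) - kappa * d x)).
  assert (Mono : forall s', s < s' < T -> h T - h s' <= 0 * (T - s')).
  { intros s' Hs'. apply (mvt_closed h D). lra.
    intros x Hx. split.
    - assert (He : is_derive (fun x => exp (- kappa * x)) x (- kappa * exp (- kappa * x))).
      { auto_derive; auto. ring. }
      assert (Hd : is_derive d x (f (y1 x) x - f (y2 x) x)).
      { apply (is_derive_minus y1 y2 x); [apply D1 | apply D2]; lra. }
      eapply is_derive_eq. apply (is_derive_mult _ _ x _ _ He Hd). intros; apply Rmult_comm.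
      unfold D, plus, mult; simpl. ring.
    - unfold D. rewrite <- (Rmult_0_r (exp (- kappa * x))).
      apply Rmult_le_compat_l. left; apply exp_pos.
      assert (Hp := Pos x ltac:(lra)).
      assert (L := lip_x f kappa Hlip (y1 x) (y2 x) x).
      rewrite (Rabs_right (y1 x - y2 x)) in L by (unfold d in Hp; cbv beta in Hp; lra).
      pose proof (Rle_abs (f (y1 x) x - f (y2 x) x)). unfold d in *; cbv beta in *. lra. }
  assert (HhT : 0 < h T). { unfold h. apply Rmult_lt_0_compat. apply exp_pos. unfold d; lra. }
  set (eps := h T * exp (kappa * s)).
  assert (Heps : 0 < eps). { unfold eps. apply Rmult_lt_0_compat; auto. apply exp_pos. }
  destruct (Hrc eps Heps) as [del [Hdel K1]].
  set (s' := s + Rmin del (T - s) / 2).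
  assert (Hs' : s < s' < T /\ s' < s + del).
  { unfold s'. pose proof (Rmin_l del (T - s)). pose proof (Rmin_r del (T - s)).
    assert (0 < Rmin del (T - s)) by (apply Rmin_pos; lra). lra. }
  assert (A := K1 s' ltac:(lra)). apply Rabs_def2 in A.
  assert (Hm := Mono s' ltac:(lra)).
  assert (Hexp : exp (- kappa * s') * exp (kappa * s) <= 1).
  { rewrite <- exp_plus. rewrite <- exp_0.
    destruct (Req_dec (- kappa * s' + kappa * s) 0) as [->|Hne]. lra.
    left. apply exp_increasing.
    assert (kappa * (s' - s) >= 0) by (apply Rle_ge, Rmult_le_pos; lra). lra. }
  assert (h s' < h T).
  { unfold h. assert (d s' < eps) by lra.
    assert (0 < exp (- kappa * s')) by apply exp_pos.
    apply Rlt_le_trans with (exp (- kappa * s') * eps).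
    - apply Rmult_lt_compat_l; auto.
    - unfold eps. unfold h.
      replace (exp (- kappa * s') * (exp (- kappa * T) * d T * exp (kappa * s)))
        with ((exp (- kappa * s') * exp (kappa * s)) * (exp (- kappa * T) * d T)) by ring.
      fold (h T). nra. }
  lra.
Qed.

Lemma frac_part_ex x : exists p : Z, 0 <= x - IZR p <= 1.
Proof.
  destruct (archimed x) as [H1 H2]. exists (up x - 1)%Z.
  rewrite minus_IZR. simpl. lra.
Qed.

Lemma sup_bound f kappa : lipschitz2 kappa f -> periodic_Z2 f ->
  forall x t, Rabs (f x t) <= sup_norm f.
Proof.
  intros Hlip Hper.
  assert (Hk := kappa_nonneg f kappa Hlip).
  set (B := Rabs (f 0 0) + 2 * kappa).
  assert (HB : forall x t, Rabs (f x t) <= B).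
  { intros x t. destruct (frac_part_ex x) as [p Hp]. destruct (frac_part_ex t) as [q Hq].
    assert (Ef : f x t = f (x - IZR p) (t - IZR q)).
    { rewrite <- (Hper (x - IZR p) (t - IZR q) p q). f_equal; ring. }
    rewrite Ef. set (x' := x - IZR p) in *. set (t' := t - IZR q) in *.
    assert (L := Hlip x' t' 0 0).
    assert (Sq : sqrt ((x' - 0) ^ 2 + (t' - 0) ^ 2) <= 2).
    { rewrite <- (sqrt_square 2) by lra. apply sqrt_le_1_alt. nra. }
    assert (kappa * sqrt ((x' - 0) ^ 2 + (t' - 0) ^ 2) <= kappa * 2)
      by (apply Rmult_le_compat_l; auto).
    replace (f x' t') with ((f x' t' - f 0 0) + f 0 0) by ring.
    eapply Rle_trans. apply Rabs_triang. unfold B. lra. }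
  unfold sup_norm.
  set (E := fun y => exists x t, y = Rabs (f x t)).
  destruct (Lub_Rbar_correct E) as [Hub Hl].
  assert (U : Rbar_le (Lub_Rbar E) (Finite B)).
  { apply Hl. intros y [x [t ->]]. simpl. apply HB. }
  intros x t.
  assert (L : Rbar_le (Finite (Rabs (f x t))) (Lub_Rbar E)).
  { apply Hub. exists x, t. reflexivity. }
  destruct (Lub_Rbar E) as [r| |]; simpl in *; try contradiction. exact L.
Qed.

Lemma v_rc f v (Hv : is_solution_family f v) c t0 : 0 <= t0 -> rc (fun s => v s c) t0.
Proof.
  intros H0. destruct (Req_dec t0 0) as [->|Hne].
  - destruct (Hv c) as [E0 [Hl _]]. intros eps He.
    destruct (proj1 (filterlim_locally _ _) Hl (mkposreal eps He)) as [d Hd].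
    exists d. split. apply cond_pos. intros s Hs. rewrite E0.
    apply (Hd s). change (Rabs (s - 0) < d). rewrite Rabs_right; lra. lra.
  - destruct (Hv c) as [_ [_ Hd]]. eapply deriv_rc. apply Hd. lra.
Qed.

Lemma v_bound f v (Hv : is_solution_family f v) M (HM : forall x t, Rabs (f x t) <= M)
  c t0 T : 0 <= t0 <= T ->
  v T c - v t0 c <= M * (T - t0) /\ v t0 c - v T c <= M * (T - t0).
Proof.
  intros H. destruct (Req_dec t0 T) as [->|Hne].
  { replace (T - T) with 0 by ring. split; lra. }
  destruct (Hv c) as [_ [_ Hd]].
  split.
  - apply (mvt_le (fun s => v s c) (fun x => f (v x c) x)). lra.
    intros x Hx. split. apply Hd. lra.
    pose proof (HM (v x c) x). pose proof (Rle_abs (f (v x c) x)). lra.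
    apply v_rc with f; auto; lra.
  - assert (A : (fun s => - v s c) T - (fun s => - v s c) t0 <= M * (T - t0)).
    { apply (mvt_le (fun s => - v s c) (fun x => - f (v x c) x)). lra.
      intros x Hx. split. apply (is_derive_opp (fun s => v s c)). apply Hd. lra.
      pose proof (HM (v x c) x). pose proof (Rle_abs (- f (v x c) x)).
      rewrite Rabs_Ropp in *. lra.
      apply rc_opp. apply v_rc with f; auto; lra. }
    simpl in A. lra.
Qed.

Theorem lemma2p1 (f : R -> R -> R) (kappa : R) (v : R -> R -> R)
  (Hlip : lipschitz2 kappa f) (Hper : periodic_Z2 f)
  (Hv : is_solution_family f v) :
  forall sigma l t c : R, 0 < sigma -> 0 < l -> 0 < t ->
    v ((sigma + l) * t) ((sigma + l) * c)
    <= v (sigma * t) (sigma * c) + v (l * t) (l * c) + 2 * (sup_norm f + 1).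
Proof.
  intros sigma l t c Hs Hl Ht.
  set (a := sigma * t). set (b := l * t). set (C1 := sigma * c). set (C2 := l * c).
  replace ((sigma + l) * t) with (a + b) by (unfold a, b; ring).
  replace ((sigma + l) * c) with (C1 + C2) by (unfold C1, C2; ring).
  assert (Ha : 0 < a) by (unfold a; nra). assert (Hb : 0 < b) by (unfold b; nra).
  set (M := sup_norm f).
  assert (HM : forall x t, Rabs (f x t) <= M) by (apply sup_bound with kappa; auto).
  assert (HM0 : 0 <= M) by (pose proof (HM 0 0); pose proof (Rabs_pos (f 0 0)); lra).
  destruct (archimed a) as [Ua1 Ua2].
  set (m := (up a - 1)%Z).
  assert (Hm : a - 1 < IZR m <= a) by (unfold m; rewrite minus_IZR; simpl; lra).
  assert (Hm0 : 0 <= IZR m).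
  { apply IZR_le. assert (-1 < m)%Z by (apply lt_IZR; simpl; lra). lia. }
  destruct (archimed C2) as [Uk1 Uk2]. set (k := up C2) in *.
  assert (Cmp1 : v (IZR m) (C1 + C2) <= v (IZR m) C1 + IZR k).
  { apply (cmp f kappa Hlip (fun s => v s (C1 + C2)) (fun s => v s C1 + IZR k) 0 (IZR m)); auto.
    - apply v_rc with f; auto; lra.
    - apply rc_const_add. apply v_rc with f; auto; lra.
    - intros x Hx. destruct (Hv (C1 + C2)) as [_ [_ Hd]]. apply Hd. lra.
    - intros x Hx. destruct (Hv C1) as [_ [_ Hd]].
      eapply is_derive_eq. apply (is_derive_plus (fun s => v s C1) (fun _ => IZR k)).
      apply Hd; lra. apply is_derive_const.
      rewrite <- (Hper (v x C1) x k 0%Z). change (IZR 0) with 0. unfold plus, zero; simpl. rewrite !Rplus_0_r. reflexivity.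
    - destruct (Hv (C1 + C2)) as [E1 _]. destruct (Hv C1) as [E2 _]. rewrite E1, E2. lra. }
  assert (B1 := proj2 (v_bound f v Hv M HM C1 (IZR m) a ltac:(lra))).
  set (X := v (IZR m) (C1 + C2)) in *.
  destruct (archimed (X - C2)) as [Uj1 Uj2]. set (j := up (X - C2)) in *.
  assert (Cmp2 : v (a + b) (C1 + C2) <= v (a + b - IZR m) C2 + IZR j).
  { apply (cmp f kappa Hlip (fun s => v s (C1 + C2)) (fun s => v (s - IZR m) C2 + IZR j)
      (IZR m) (a + b)); auto.
    - lra.
    - apply v_rc with f; auto; lra.
    - apply rc_const_add. apply (rc_shift (fun s => v s C2)). apply v_rc with f; auto; lra.
    - intros x Hx. destruct (Hv (C1 + C2)) as [_ [_ Hd]]. apply Hd. lra.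
    - intros x Hx. destruct (Hv C2) as [_ [_ Hd]].
      assert (Hsh : is_derive (fun s => v (s - IZR m) C2) x (f (v (x - IZR m) C2) (x - IZR m))).
      { apply is_derive_eq with (l := scal 1 (f (v (x - IZR m) C2) (x - IZR m))).
        apply (is_derive_comp (fun s => v s C2) (fun s => s - IZR m) x _ 1).
        apply Hd; lra. auto_derive; auto.
        unfold scal; simpl; unfold mult; simpl. ring. }
      eapply is_derive_eq. apply (is_derive_plus (fun s => v (s - IZR m) C2) (fun _ => IZR j)).
      exact Hsh. apply is_derive_const.
      rewrite <- (Hper (v (x - IZR m) C2) (x - IZR m) j m). unfold plus, zero; simpl.
      rewrite Rplus_0_r. f_equal. ring.
    - destruct (Hv C2) as [E2 _]. replace (IZR m - IZR m) with 0 by ring. rewrite E2.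
      unfold X in *. lra. }
  assert (B2 := proj1 (v_bound f v Hv M HM C2 b (a + b - IZR m) ltac:(lra))).
  assert (Mm : M * (a - IZR m) <= M) by (rewrite <- (Rmult_1_r M) at 2; apply Rmult_le_compat_l; lra).
  replace (a + b - IZR m - b) with (a - IZR m) in B2 by ring.
  lra.
Qed.
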